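(* For all integers $n\ge 3$ and $1<k<n$, the vertex connectivity of $G=H_B(n,k)$ is $\kappa(G)=1$.
   Context: Fix integers $n\ge 2$ and $1\le k<n$ and positive real numbers $x_1<x_2<\dots<x_n$. Let $\mathscr{B}_n=\{\pm x_1,\pm x_2,\dots,\pm x_{n-1},x_n\}$ (so $-x_n\notin\mathscr{B}_n$). Let $\phi(\mathscr{B}_n)$ be the family of all nonempty subsets $S\subseteq\mathscr{B}_n$ whose elements have pairwise distinct absolute values and whose element of largest absolute value is positive. Let $\mathscr{B}_n^+=\{x_1,\dots,x_n\}$, let $V_1$ be the set of all $k$-element subsets of $\mathscr{B}_n^+$, and let $V_2=\phi(\mathscr{B}_n)\setminus V_1$. For $A\in\phi(\mathscr{B}_n)$ put $A^\dagger=\{|a|:a\in A\}$. The bipartite Kneser B type-$k$ graph $H_B(n,k)$ is the simple graph with vertex set $V_1\cup V_2$ in which $X\in V_1$ and $Y\in V_2$ are adjacent if and only if $X\subseteq Y^\dagger$ or $Y^\dagger\subseteq X$, and there are no other edges. *)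

(* Defs.v *)
From mathcomp Require Import all_boot.
Set Implicit Arguments. Unset Strict Implicit. Unset Printing Implicit Defensive.

(* A graph is given by a vertex set V inside a finType T and an adjacency
   relation e (only used between vertices of V). *)
Section Graph.
Variable T : finType.

Definition induced_rel (e : rel T) (W : {set T}) : rel T :=
  [rel u v | [&& u \in W, v \in W & e u v]].

Definition connected_on (e : rel T) (W : {set T}) : bool :=
  [forall u in W, forall v in W, connect (induced_rel e W) u v].

(* S is a "separating" set of G = (V, e): G - S is disconnected or has at most
   one vertex (standard convention, so that kappa(K_m) = m - 1). *)
Definition separates (V : {set T}) (e : rel T) (S : {set T}) : bool :=
  (S \subset V) && ~~ ((1 < #|V :\: S|) && connected_on e (V :\: S)).

(* vertex connectivity kappa(G): minimum size of a separating set
   (S = V is always separating, so the minimum is over a nonempty family). *)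
Definition vertex_connectivity (V : {set T}) (e : rel T) : nat :=
  \big[minn/#|V|]_(S : {set T} | separates V e S) #|S|.
End Graph.

(* The real number +x_{i+1} is encoded as (i, true) and -x_{i+1} as
   (i, false), for i : 'I_n (0-indexed).  Absolute value |a| corresponds to
   the index a.1 (x_1 < ... < x_n, so the order on indices is the order on
   absolute values). *)
Section HB.
Variables n k : nat.
Notation elt := ('I_n * bool)%type.

Definition Bn : {set elt} := [set a : elt | a.2 || (a.1 < n.-1)].

Definition dagger (A : {set elt}) : {set 'I_n} := [set a.1 | a in A].

Definition inPhi (S : {set elt}) : bool :=
  [&& S != set0, S \subset Bn,
      #|dagger S| == #|S|
    & [forall a in S, [forall b in S, b.1 <= a.1] ==> a.2]].

Definition Bplus : {set elt} := [set a : elt | a.2].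

Definition inV1 (S : {set elt}) : bool := (S \subset Bplus) && (#|S| == k).

Definition inV2 (S : {set elt}) : bool := inPhi S && ~~ inV1 S.

Definition HB_vertices : {set {set elt}} := [set S | inPhi S].

(* X in V1, Y in V2 adjacent iff X subset Y^dagger or Y^dagger subset X
   (X consists of positive elements, so X is identified with dagger X) *)
Definition HB_edge1 (X Y : {set elt}) : bool :=
  [&& inV1 X, inV2 Y & (dagger X \subset dagger Y) || (dagger Y \subset dagger X)].

Definition HB_adj : rel {set elt} :=
  [rel X Y | HB_edge1 X Y || HB_edge1 Y X].
End HB.

Arguments Bn : clear implicits.
Arguments dagger {n}.
Arguments inPhi : clear implicits.
Arguments Bplus : clear implicits.
Arguments inV1 : clear implicits.
Arguments inV2 : clear implicits.
Arguments HB_vertices : clear implicits.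
Arguments HB_edge1 : clear implicits.
Arguments HB_adj : clear implicits.

(* Main.v *)
Require Import Defs.
From mathcomp Require Import all_boot.

Lemma subset_card_k (T : finType) (A : {set T}) k :
  k <= #|A| -> exists B : {set T}, B \subset A /\ #|B| = k.
Proof.
move=> hk; exists [set x in take k (enum A)]; split.
  apply/subsetP=> x; rewrite inE => /mem_take; by rewrite mem_enum.
rewrite cardsE; move/card_uniqP: (take_uniq k (enum_uniq (mem A))) => ->.
by rewrite size_take -cardE; case: ltngtP hk.
Qed.

Lemma choose_k (T : finType) (D : {set T}) k : k <= #|T| ->
  exists I : {set T}, #|I| = k /\ (I \subset D \/ D \subset I).
Proof.
move=> hkT; case: (leqP k #|D|) => h.
  by have [B [h1 h2]] := (@subset_card_k _ D _ h); exists B; split => //; left.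
have hc : k - #|D| <= #|~: D|.
  by rewrite leq_subLR cardsC.
have [B [h1 h2]] := (@subset_card_k _ (~: D) _ hc).
exists (D :|: B); split; last by right; apply: subsetUl.
have hI : D :&: B = set0.
  apply/setP=> x; rewrite !inE; apply/negbTE/andP=> [[xD xB]].
  by move/subsetP: h1 => /(_ x xB); rewrite inE xD.
rewrite cardsU hI cards0 subn0 h2 subnKC //; exact: ltnW.
Qed.

Lemma connect_noedge (T : finType) (e : rel T) x y :
  (forall z, ~~ e x z) -> connect e x y -> x = y.
Proof.
move=> h /connectP [[|z p]] /=; first by move=> _ ->.
by rewrite (negbTE (h z)).
Qed.

Lemma bigmin_le (I : eqType) (r : seq I) (P : pred I) (F : I -> nat) idx j :
  j \in r -> P j -> \big[minn/idx]_(i <- r | P i) F i <= F j.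
Proof.
elim: r => //= a r IH; rewrite inE big_cons => /orP [/eqP <- -> | hj hP].
  exact: geq_minl.
by case: (P a); rewrite ?geq_min IH ?orbT.
Qed.

Section HBproof.
Variables n k : nat.
Notation elt := ('I_n * bool)%type.

Definition pos (I : {set 'I_n}) : {set elt} := [set a : elt | a.2 && (a.1 \in I)].

Lemma pos_imset I : pos I = [set (i, true) | i in I].
Proof.
apply/setP=> [[i b]]; rewrite inE /=; apply/andP/imsetP.
  by case=> -> hi; exists i.
by case=> j hj [-> ->].
Qed.

Lemma card_pos I : #|pos I| = #|I|.
Proof. by rewrite pos_imset card_imset // => i j [->]. Qed.

Lemma dagger_pos I : dagger (pos I) = I.
Proof.
apply/setP=> i; apply/imsetP/idP.
  by case=> a; rewrite inE => /andP [_ h] ->.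
by move=> hi; exists (i, true); rewrite // inE.
Qed.

Lemma pos_Bplus I : pos I \subset Bplus n.
Proof. by apply/subsetP=> a; rewrite !inE => /andP []. Qed.

Lemma inPhi_pos I : I != set0 -> inPhi n (pos I).
Proof.
case/set0Pn=> i hi; apply/and4P; split.
- by apply/set0Pn; exists (i, true); rewrite inE.
- by apply/subsetP=> a; rewrite !inE => /andP [-> _].
- by rewrite dagger_pos card_pos.
- by apply/forall_inP=> a; rewrite inE => /andP [-> _]; rewrite implybT.
Qed.

Lemma Bplus_pos (X : {set elt}) : X \subset Bplus n -> X = pos (dagger X).
Proof.
move/subsetP=> hX; apply/setP=> [[i b]]; rewrite inE /=; apply/idP/andP.
  move=> h; have := hX _ h; rewrite inE /= => hb; split => //.
  by apply/imsetP; exists (i, b).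
case=> -> /imsetP [[j c] h /= ->]; have := hX _ h; rewrite inE /= => hc.
by rewrite -hc.
Qed.

Lemma inV1_pos (X : {set elt}) : inV1 n k X -> X = pos (dagger X) /\ #|dagger X| = k.
Proof.
case/andP=> hX /eqP hk; have e := Bplus_pos X hX; split => //.
by rewrite -hk {2}e card_pos.
Qed.

End HBproof.

Section Main.
Variables n k : nat.
Hypothesis hn : 3 <= n.
Hypothesis hk1 : 1 < k.
Hypothesis hkn : k < n.
Notation elt := ('I_n * bool)%type.
Notation V := (HB_vertices n).
Notation e := (HB_adj n k).

Let i0 : 'I_n := Ordinal (leq_ltn_trans (leq0n k) hkn).
Definition F : {set elt} := pos n [set: 'I_n].

Lemma F_inV2 : inV2 n k F.
Proof.
apply/andP; split.
  by apply: inPhi_pos; apply/set0Pn; exists i0.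
apply/negP=> /andP [_ /eqP]; rewrite card_pos cardsT card_ord => h.
by move: hkn; rewrite h ltnn.
Qed.

Lemma F_inV : F \in V.
Proof. by rewrite inE; case/andP: F_inV2. Qed.

Lemma induced_sym (W : {set {set elt}}) : symmetric (induced_rel e W).
Proof.
move=> x y; rewrite /induced_rel /= andbCA; congr (_ && (_ && _)).
by rewrite /HB_adj /= orbC.
Qed.

Lemma conn_F (W : {set {set elt}}) u : V \subset W -> u \in V ->
  connect (induced_rel e V) u F.
Proof.
move=> _ hu; have hF := F_inV.
case: (boolP (inV1 n k u)) => h1.
  apply: connect1; apply/and3P; split => //; apply/orP; left.
  by rewrite /HB_edge1 h1 F_inV2 /= /F dagger_pos subsetT.
have hu2 : inV2 n k u by move: hu; rewrite inE /inV2 h1 andbT.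
have [|I [hI hsub]] := @choose_k _ (dagger u) k; first by rewrite card_ord ltnW.
have hX1 : inV1 n k (pos n I) by rewrite /inV1 pos_Bplus card_pos hI eqxx.
have hXV : pos n I \in V.
  rewrite inE; apply: inPhi_pos; apply/set0Pn.
  by apply/card_gt0P; rewrite hI ltnW.
apply: (@connect_trans _ _ (pos n I)); apply: connect1; apply/and3P; split => //.
  apply/orP; right; rewrite /HB_edge1 hX1 hu2 dagger_pos /=.
  by case: hsub => ->; rewrite ?orbT.
apply/orP; left; apply/and3P; split => //; first exact: F_inV2.
by apply/orP; left; apply/subsetP=> i _; rewrite /F dagger_pos inE.
Qed.

Lemma connected_V : connected_on e V.
Proof.
apply/forall_inP=> u hu; apply/forall_inP=> v hv.
apply: (connect_trans (conn_F V u (subxx V) hu)).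
rewrite (sym_connect_sym (induced_sym V)).
exact: (conn_F V v (subxx V) hv).
Qed.

Definition I0 : {set 'I_n} := [set i : 'I_n | i < k].
Definition X0 : {set elt} := pos n I0.
Definition Y0 : {set elt} :=
  [set a : elt | if a.2 then (0 < a.1 < k) else (a.1 == 0 :> nat)].

Lemma card_I0 : #|I0| = k.
Proof.
have -> : I0 = [set widen_ord (ltnW hkn) j | j : 'I_k].
  apply/setP=> i; rewrite inE; apply/idP/imsetP.
    by move=> h; exists (Ordinal h) => //; apply: val_inj.
  by case=> j _ ->; rewrite /= ltn_ord.
by rewrite card_imset ?card_ord // => a b /(congr1 val) /= /val_inj.
Qed.

Lemma dagger_Y0 : dagger Y0 = I0.
Proof.
apply/setP=> i; rewrite inE; apply/imsetP/idP.
  case=> [[j []]]; rewrite inE /= => h ->; first by case/andP: h.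
  by move/eqP: h => ->; exact: ltnW hk1.
move=> hi; case: (posnP i) => h0.
  by exists (i, false); rewrite // inE /= h0.
by exists (i, true); rewrite // inE /= h0 hi.
Qed.

Lemma i0Y0 : (i0, false) \in Y0.
Proof. by rewrite inE. Qed.

Lemma Y0_inV : Y0 \in V.
Proof.
rewrite inE; apply/and4P; split.
- by apply/set0Pn; exists (i0, false); exact: i0Y0.
- apply/subsetP=> [[i b]]; rewrite !inE /=; case: b => //= /eqP ->.
  by case: n hn => [|[|[|m]]].
- rewrite /dagger card_in_imset //.
  move=> [i []] [j []]; rewrite !inE /= => h1 h2 eij; subst j => //.
  + by rewrite (eqP h2) in h1.
  + by rewrite (eqP h1) in h2.
- apply/forall_inP=> [[i b]]; rewrite inE /=; case: b => /=; first by rewrite implybT.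
  move=> /eqP hi.
  apply/implyP=> /forall_inP h.
  have hk' : k.-1 < n by rewrite (leq_ltn_trans (leq_pred k)).
  have := h (Ordinal hk', true); rewrite inE /= hi.
  by case: k hk1 => [|[|m]] //= _; rewrite ltnS leqnn /= => /(_ isT).
Qed.

Lemma Y0_notV1 : ~~ inV1 n k Y0.
Proof.
apply/negP=> /andP [/subsetP h _]; have := h _ i0Y0; by rewrite inE.
Qed.

Lemma X0_inV : X0 \in V.
Proof.
rewrite inE; apply: inPhi_pos; apply/set0Pn; exists i0; rewrite inE /=.
exact: leq_ltn_trans (leq0n 1) hk1.
Qed.

Lemma X0_V1 : inV1 n k X0.
Proof. by rewrite /inV1 pos_Bplus card_pos card_I0 eqxx. Qed.

Lemma Y0_noadj Z : ~~ induced_rel e (V :\: [set X0]) Y0 Z.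
Proof.
apply/negP=> /and3P [_ hZ /orP [/and3P [h _ _]|]].
  by move: Y0_notV1; rewrite h.
case/and3P=> hZ1 _ hsub.
have [eZ cZ] := inV1_pos n k Z hZ1.
have eD : dagger Z = I0.
  rewrite dagger_Y0 in hsub; case/orP: hsub => hs.
    by have := eqEcard (dagger Z) I0; rewrite hs cZ card_I0 leqnn => /eqP.
  by have := eqEcard I0 (dagger Z); rewrite hs cZ card_I0 leqnn => /eqP.
move: hZ; rewrite !inE eZ eD => /andP [].
by rewrite /X0 eqxx.
Qed.

Lemma F_ne_X0 : F != X0.
Proof.
apply/eqP=> eF.
have hm : n.-1 < n by rewrite ltn_predL (leq_trans _ hn).
have : (Ordinal hm, true) \in F by rewrite /F /pos !inE.
rewrite eF /X0 /pos /I0 !inE /= ltnNge -ltnS prednK ?hkn //.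
exact: leq_trans _ hn.
Qed.

Lemma X0_sep : separates V e [set X0].
Proof.
apply/andP; split; first by rewrite sub1set X0_inV.
apply/negP=> /andP [_ /forall_inP h].
have hY : Y0 \in V :\: [set X0].
  rewrite in_setD1 Y0_inV andbT; apply/eqP=> eY.
  by move: i0Y0; rewrite eY /X0 /pos inE.
have hFW : F \in V :\: [set X0].
  by rewrite in_setD1 F_inV andbT F_ne_X0.
have := h _ hY; move/forall_inP => /(_ _ hFW) /(connect_noedge _ _ _ _ Y0_noadj) eY.
by move: i0Y0; rewrite eY /F /pos inE.
Qed.

Lemma not_sep0 : ~~ separates V e set0.
Proof.
rewrite /separates sub0set setD0 connected_V andbT /= negbK.
apply/card_gt1P; exists F, X0; split; [exact: F_inV | exact: X0_inV |].
exact: F_ne_X0.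
Qed.

Lemma kappa1 : vertex_connectivity V e = 1.
Proof.
apply/eqP; rewrite eqn_leq; apply/andP; split.
  rewrite /vertex_connectivity -(cards1 X0).
by apply: bigmin_le; [exact: mem_index_enum | exact: X0_sep].
apply: (big_ind (fun m => 0 < m)).
- by apply/card_gt0P; exists F; exact: F_inV.
- by move=> x y hx hy; rewrite leq_min hx hy.
move=> S hS; rewrite card_gt0; apply: contraNneq not_sep0 => <-; exact: hS.
Qed.

End Main.

Theorem mainTheorem6 (n k : nat) :
  3 <= n -> 1 < k < n ->
  vertex_connectivity (HB_vertices n) (HB_adj n k) = 1.
Proof. by move=> hn /andP [h1 h2]; exact: kappa1. Qed.
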